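(* Under the standing setting and assumptions (A1)–(A3) described in the context, assume $\mathcal R(X)\neq\emptyset$ for every $X\in\mathcal X$. Then the following are equivalent: (a) $|\mathcal R(X)|=1$ for every $X\in\mathcal X$; (b) $|\mathcal R(X)|=1$ for every $X\in\partial\mathcal A\cap\partial(\mathcal A+\ker(\pi))$; (c) $\partial\mathcal A\cap\partial(\mathcal A+\ker(\pi))\cap(\partial\mathcal A+(\ker(\pi)\setminus\{0\}))=\emptyset$; (d) $\partial\mathcal A\cap(\partial\mathcal A+(\ker(\pi)\setminus\{0\}))\subset\mathrm{int}(\mathcal A+\ker(\pi))$.
   Context: Let $\mathcal X$ be a Hausdorff, first countable, locally convex topological vector space over $\mathbb R$, partially ordered by a partial order $\geq$ with positive cone $\mathcal X_+=\{X\in\mathcal X: X\geq 0\}$. Let $\mathcal M\subset\mathcal X$ be a vector subspace with $1<\dim\mathcal M<\infty$, carrying the relative topology, and let $\pi:\mathcal M\to\mathbb R$ be linear with $\ker(\pi)=\{Z\in\mathcal M:\pi(Z)=0\}$. Standing assumptions: (A1) there is $U\in\mathcal M\cap\mathcal X_+$ with $\pi(U)=1$; (A2) $\mathcal A\subsetneq\mathcal X$ is closed, contains $0$, and satisfies $\mathcal A+\mathcal X_+\subset\mathcal A$; (A3) the map $\rho(X)=\inf\{\pi(Z): Z\in\mathcal M,\ X+Z\in\mathcal A\}$ is finitely valued and continuous on $\mathcal X$. The optimal payoff map is $\mathcal R(X)=\{Z\in\mathcal M: X+Z\in\mathcal A,\ \pi(Z)=\rho(X)\}$; $|\cdot|$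 is cardinality. $\partial$ and $\mathrm{int}$ denote boundary and interior in $\mathcal X$. *)

(* Defs.v *)
From HB Require Import structures.
From mathcomp Require Import all_boot all_order all_algebra.
From mathcomp Require Import all_classical all_reals all_analysis.
Set Implicit Arguments. Unset Strict Implicit. Unset Printing Implicit Defensive.
Import Order.TTheory GRing.Theory Num.Theory.
Import numFieldTopology.Exports.
Local Open Scope classical_set_scope.
Local Open Scope ring_scope.

Section Defs.
Context {R : realType} {E : tvsType R}.

Definition first_countable_space : Prop :=
  forall x : E, exists B : nat -> set E,
    (forall n, nbhs x (B n)) /\ (forall U, nbhs x U -> exists n, B n `<=` U).

Definition vector_order (le : E -> E -> Prop) : Prop :=
  [/\ (forall x, le x x),
      (forall x y, le x y -> le y x -> x = y),
      (forall x y z, le x y -> le y z -> le x z),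
      (forall x y z, le x y -> le (x + z) (y + z)) &
      (forall (a : R) x y, 0 <= a -> le x y -> le (a *: x) (a *: y))].

Definition pos_cone (le : E -> E -> Prop) : set E := [set x | le 0 x].

Definition is_vsubspace (M : set E) : Prop :=
  M 0 /\ (forall (a : R) x y, M x -> M y -> M (a *: x + y)).

Definition has_dim (M : set E) (n : nat) : Prop :=
  is_vsubspace M /\
  exists b : 'I_n -> E,
    (forall i, M (b i)) /\
    (forall c : 'I_n -> R, \sum_(i < n) c i *: b i = 0 -> forall i, c i = 0) /\
    (forall x, M x -> exists c : 'I_n -> R, x = \sum_(i < n) c i *: b i).

(* pi : M -> R linear (values outside M are irrelevant) *)
Definition linear_on (M : set E) (pi : E -> R) : Prop :=
  forall (a : R) x y, M x -> M y -> pi (a *: x + y) = a * pi x + pi y.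

Definition kerpi (M : set E) (pi : E -> R) : set E := [set Z | M Z /\ pi Z = 0].

Definition minksum (A B : set E) : set E :=
  [set x | exists a b, A a /\ B b /\ x = a + b].

Definition bdry (S : set E) : set E := closure S `\` interior S.

Definition price_set (M A : set E) (pi : E -> R) (X : E) : set R :=
  [set r | exists Z, M Z /\ A (X + Z) /\ r = pi Z].

Definition rho (M A : set E) (pi : E -> R) (X : E) : R := inf (price_set M A pi X).

Definition optR (M A : set E) (pi : E -> R) (X : E) : set E :=
  [set Z | M Z /\ A (X + Z) /\ pi Z = rho M A pi X].

End Defs.

(* Main.v *)
Require Import Defs.
From HB Require Import structures.
From mathcomp Require Import all_boot all_order all_algebra.
From mathcomp Require Import all_classical all_reals all_analysis.
From mathcomp Require Import lra.
Import Order.TTheory GRing.Theory Num.Theory.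
Import numFieldTopology.Exports.
Local Open Scope classical_set_scope.
Local Open Scope ring_scope.

Lemma nbhs_dir (R : realType) (E : tvsType R) (X w : E) (S : set E) :
  nbhs X S -> exists e : R, 0 < e /\ S (X + e *: w).
Proof.
move=> XS.
have /= := add_continuous (X, 0) S.
rewrite addr0 => /(_ XS) [] [B1 B2] /= [B1X B20] BS.
have /= := scale_continuous ((0:R), w) B2.
rewrite scale0r => /(_ B20) [] [C1 C2] /= [C10 C2w] CB.
move: C10 => /nbhs_ballP [e /= e0 He].
exists (e / 2); split; first by rewrite divr_gt0.
apply: (BS (X, e / 2 *: w)); split => /=; first exact: nbhs_singleton.
apply: (CB (e / 2, w)); split => /=; last exact: nbhs_singleton.
apply: He. rewrite /ball /= sub0r normrN gtr0_norm ?divr_gt0 //.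
lra.
Qed.

Lemma nbhs_lt_pre (R : realType) (T : topologicalType) (f : T -> R) (X : T) (c : R) :
  continuous f -> f X < c -> nbhs X [set Y | f Y < c].
Proof.
move=> fC h; apply: (fC X [set y | y < c]); apply: open_nbhs_nbhs; split => //; exact: open_lt.
Qed.

Lemma nbhs_gt_pre (R : realType) (T : topologicalType) (f : T -> R) (X : T) (c : R) :
  continuous f -> c < f X -> nbhs X [set Y | c < f Y].
Proof.
move=> fC h; apply: (fC X [set y | c < y]); apply: open_nbhs_nbhs; split => //; exact: open_gt.
Qed.
Theorem mainTheorem11 (R : realType) (E : tvsType R)
  (le : E -> E -> Prop) (M : set E) (pi : E -> R) (A : set E) :
  hausdorff_space E ->
  first_countable_space (E := E) ->
  vector_order le ->
  is_vsubspace M ->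
  (exists n : nat, (1 < n)%N /\ has_dim M n) ->
  linear_on M pi ->
  (* (A1) *)
  (exists U, M U /\ pos_cone le U /\ pi U = 1) ->
  (* (A2) *)
  closed A -> A 0 -> A <> setT -> minksum A (pos_cone le) `<=` A ->
  (* (A3) *)
  (forall X, has_inf (price_set M A pi X)) ->
  continuous (rho M A pi) ->
  (* standing hypothesis of the theorem *)
  (forall X, optR M A pi X !=set0) ->
  let K := kerpi M pi in
  let K0 := K `\ 0 in
  let AK := minksum A K in
  [/\ ((forall X, exists Z, optR M A pi X = [set Z]) <->
       (forall X, (bdry A `&` bdry AK) X -> exists Z, optR M A pi X = [set Z])),
      ((forall X, (bdry A `&` bdry AK) X -> exists Z, optR M A pi X = [set Z]) <->
       bdry A `&` bdry AK `&` minksum (bdry A) K0 = set0) &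
      (bdry A `&` bdry AK `&` minksum (bdry A) K0 = set0 <->
       bdry A `&` minksum (bdry A) K0 `<=` interior AK)].
Proof.
intros _ _ H3 H4 _ piL H7 clA A0 _ AP hinf rhoC optne K K0 AK.
case: H3 => leR _ _ leD leZ. case: H4 => M0 MC. case: H7 => U [MU [U0 piU]].
have MD : forall x y, M x -> M y -> M (x + y).
  by move=> x y mx my; have := MC 1 x y mx my; rewrite scale1r.
have MZ : forall a x, M x -> M (a *: x).
  by move=> a x mx; have := MC a x 0 mx M0; rewrite addr0.
have MN : forall x, M x -> M (- x) by move=> x mx; rewrite -scaleN1r; exact: MZ.
have pi0 : pi 0 = 0 by have := piL 1 0 0 M0 M0; rewrite scale1r addr0; lra.
have piD : forall x y, M x -> M y -> pi (x + y) = pi x + pi y.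
  by move=> x y mx my; have := piL 1 x y mx my; rewrite scale1r mul1r.
have piZ : forall a x, M x -> pi (a *: x) = a * pi x.
  by move=> a x mx; have := piL a x 0 mx M0; rewrite addr0 pi0 addr0.
have piN : forall x, M x -> pi (- x) = - pi x.
  by move=> x mx; rewrite -scaleN1r piZ // mulN1r.
have rho_le : forall X W, M W -> A (X + W) -> rho M A pi X <= pi W.
  move=> X W mW aW; have [_ hl] := hinf X; rewrite /rho; apply: (ge_inf hl).
  by exists W.
have rho_shift : forall X Z, M Z -> rho M A pi (X + Z) = rho M A pi X - pi Z.
  move=> X Z mZ.
  have [Z0 [m0 [a0 p0]]] := optne X; have [Z1 [m1 [a1 p1]]] := optne (X + Z).
  have h1 := rho_le (X + Z) (Z0 - Z) (MD _ _ m0 (MN _ mZ)).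
  rewrite piD ?piN ?p0 // in h1; last exact: MN.
  have h2 := rho_le X (Z1 + Z) (MD _ _ m1 mZ).
  rewrite piD ?p1 // in h2.
  have e1 : X + Z + (Z0 - Z) = X + Z0 by rewrite addrACA subrr addr0.
  have e2 : X + (Z1 + Z) = X + Z + Z1 by rewrite addrA addrAC.
  rewrite e1 e2 in h1 h2.
  have := h1 a0; have := h2 a1; lra.
have shift : forall X Z W, M Z ->
    optR M A pi (X + Z) W <-> optR M A pi X (W + Z).
  move=> X Z W mZ; split => [[mW [aW pW]] | [mW [aW pW]]]; split.
  - exact: MD.
  - split; first by rewrite addrA (addrAC X).
    by rewrite piD // pW rho_shift // subrK.
  - have hW : W = W + Z - Z by rewrite addrK.
    by rewrite hW; apply: MD mW (MN _ mZ).
  - have mW' : M W.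
      have hW : W = W + Z - Z by rewrite addrK.
      by rewrite hW; apply: MD mW (MN _ mZ).
    split; first by rewrite addrAC -addrA.
    by rewrite rho_shift // -pW piD // addrK.
have uniq_shift : forall X Z W0, M Z -> optR M A pi (X + Z) = [set W0] ->
    optR M A pi X = [set W0 + Z].
  move=> X Z W0 mZ h; apply/seteqP; split => V.
  - move=> hV; have : optR M A pi (X + Z) (V - Z) by apply/shift => //; rewrite subrK.
    by rewrite h => /= <-; rewrite subrK.
  - by move=> /= ->; apply/shift => //; rewrite h.
have A_le : forall X, A X -> rho M A pi X <= 0.
  by move=> X aX; rewrite -pi0; apply: rho_le => //; rewrite addr0.
have AKP : forall X, AK X <-> rho M A pi X <= 0.
  move=> X; split.
  - move=> [a [k [Aa [[Mk pk] ->]]]]; rewrite rho_shift // pk subr0; exact: A_le.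
  - move=> hX; have [Z [mZ [aZ pZ]]] := optne X.
    pose t := - rho M A pi X; have t0 : 0 <= t by rewrite /t; lra.
    pose P := t *: U.
    have P0 : le 0 P by have := leZ t 0 U t0 U0; rewrite scaler0.
    have mP : M P by exact: MZ.
    have aP : A (X + (Z + P)) by rewrite addrA; apply: AP; exists (X + Z), P.
    have mk : M (Z + P) by exact: MD.
    have pk : pi (Z + P) = 0 by rewrite piD // piZ // piU pZ /t; lra.
    exists (X + (Z + P)), (- (Z + P)); split => //; split; last by rewrite addrK.
    by split; [exact: MN | rewrite piN // pk oppr0].
have int_neg : forall X S, nbhs X S -> (forall Y, S Y -> rho M A pi Y <= 0) ->
    rho M A pi X < 0.
  move=> X S XS hS; have [e [e0 He]] := nbhs_dir _ _ X (- U) S XS.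
  have := hS _ He; rewrite rho_shift; last exact/MZ/MN.
  rewrite piZ; last exact: MN.
  rewrite piN // piU; lra.
have intAK : forall X, AK° X <-> rho M A pi X < 0.
  move=> X; split.
  - move=> h; apply: (int_neg X AK) => // Y /AKP //.
  - move=> h; rewrite /interior /=.
    have := nbhs_lt_pre _ _ _ _ _ rhoC h; apply: filterS => Y /= hY; apply/AKP; lra.
have bdAK : forall X, bdry AK X <-> rho M A pi X = 0.
  move=> X; split.
  - move=> [cl nint]; apply/eqP; rewrite eq_le; apply/andP; split; last first.
      by rewrite leNgt; apply/negP => /intAK.
    rewrite leNgt; apply/negP => h.
    have [Y [/AKP aY /= hY]] := cl _ (nbhs_gt_pre _ _ _ _ _ rhoC h); lra.
  - move=> h; split; first by apply: subset_closure; apply/AKP; rewrite h.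
    by move=> /intAK; rewrite h ltxx.
have eqA := (closure_id A).1 clA.
have bdA_sub : forall X, bdry A X -> A X by move=> X [cl _]; rewrite eqA.
have bdA_of : forall X, A X -> rho M A pi X = 0 -> bdry A X.
  move=> X aX h; split; first exact: subset_closure.
  move=> hi; have := int_neg X A hi A_le; rewrite h ltxx //.
have opt0 : forall W, A W -> rho M A pi W = 0 -> optR M A pi W 0.
  by move=> W aW rW; split => //; rewrite addr0 pi0 rW.
split.
- split; first by move=> h X _; exact: h.
  move=> hb X.
  have mY : M (rho M A pi X *: U) by exact: MZ.
  pose Y := X + rho M A pi X *: U.
  have rY : rho M A pi Y = 0 by rewrite /Y rho_shift // piZ // piU mulr1 subrr.
  have [Z oZ] := optne Y; have [mZ [aZ pZ]] := oZ.
  have rW : rho M A pi (Y + Z) = 0 by rewrite rho_shift // pZ rY subrr.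
  have [Z1 h1] := hb (Y + Z) (conj (bdA_of _ aZ rW) ((bdAK _).2 rW)).
  have h2 := uniq_shift Y Z Z1 mZ h1.
  by exists (Z1 + Z + rho M A pi X *: U); apply: uniq_shift mY h2.
- split.
  + move=> hb; rewrite -subset0 => W [[bA bAK] [a [k [ba [[[mk pk] kn0] eW]]]]].
    have [Z1 h1] := hb W (conj bA bAK).
    have rW := (bdAK W).1 bAK.
    have o0 := opt0 W (bdA_sub _ bA) rW.
    have ok : optR M A pi W (- k).
      split; first exact: MN.
      split; first by rewrite eW addrK; exact: bdA_sub.
      by rewrite piN // pk rW oppr0.
    rewrite h1 /= in o0 ok.
    by apply: kn0; rewrite -[k]opprK ok -o0 oppr0.
  + move=> hc W [bA bAK]; exists 0.
    have rW := (bdAK W).1 bAK.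
    apply/seteqP; split => V.
    * move=> [mV [aV pV]] /=; apply: contrapT => Vn0.
      have : (set0 : set E) W.
        rewrite -hc; split; first by split.
        exists (W + V), (- V); split.
          by apply: bdA_of => //; rewrite rho_shift // pV subrr.
        split; last by rewrite addrK.
        split; first by split; [exact: MN | rewrite piN // pV rW oppr0].
        by move=> /= /eqP; rewrite oppr_eq0 => /eqP.
      by [].
    * by move=> /= ->; apply: opt0 => //; exact: bdA_sub.
- split.
  + move=> hc X [bA hX]; apply/intAK.
    have := A_le X (bdA_sub _ bA); rewrite le_eqVlt => /orP [/eqP e | //].
    have : (set0 : set E) X.
      by rewrite -hc; split => //; split => //; apply/bdAK.
    by [].
  + move=> hd; rewrite -subset0 => X [[bA bAK] hX].
    have /intAK := hd X (conj bA hX).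
    by rewrite ((bdAK X).1 bAK) ltxx.
Qed.
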